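(* Let $a,b\in C\ell_{1,2}$. If $\mathrm{Cim}(a)$ is invertible and $N(\mathrm{Cim}(a))=N(\mathrm{Cim}(b))$, $T(\mathrm{Cim}(a))=T(\mathrm{Cim}(b))$, then at least one of the four elements $\mathrm{Cim}(a)e_t+e_t\,\mathrm{Cim}(b)$, $t=0,1,2,3$, is invertible.
   Context: $C\ell_{1,2}$ is the real Clifford algebra generated by $i_1,i_2,i_3$ with $i_1^2=1$, $i_2^2=i_3^2=-1$ and $i_ti_m=-i_mi_t$ for $t\neq m$, with real basis $e_0=1$, $e_1=i_1$, $e_2=i_2$, $e_3=i_1i_2$, $e_4=i_3$, $e_5=i_1i_3$, $e_6=i_2i_3$, $e_7=i_1i_2i_3$. For $a=\sum_{t=0}^7 a_te_t$: $\mathrm{Cim}(a)=a_1e_1+a_2e_2+a_3e_3+a_4e_4+a_5e_5+a_6e_6$; $N(a)=a_0^2-a_1^2+a_2^2-a_3^2+a_4^2-a_5^2+a_6^2-a_7^2$; $T(a)=a_0a_7+a_2a_5-a_1a_6-a_3a_4$; $P(a)=N(a)^2+4T(a)^2$. An element $c$ is invertible if there is $d$ with $cd=dc=1$; this holds iff $P(c)\neq 0$. *)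

(* Defs.v *)
From Stdlib Require Import Reals List Arith.
Import ListNotations.
Open Scope R_scope.

(* Basis index t encodes the blade by its binary digits:
   bit 0 <-> i1, bit 1 <-> i2, bit 2 <-> i3, so that
   e0=1, e1=i1, e2=i2, e3=i1i2, e4=i3, e5=i1i3, e6=i2i3, e7=i1i2i3. *)
Record Cl12 := mkCl { c0 : R; c1 : R; c2 : R; c3 : R;
                      c4 : R; c5 : R; c6 : R; c7 : R }.

Definition coef (a : Cl12) (n : nat) : R :=
  match n with
  | 0 => c0 a | 1 => c1 a | 2 => c2 a | 3 => c3 a
  | 4 => c4 a | 5 => c5 a | 6 => c6 a | 7 => c7 a
  | _ => 0
  end.

Definition ofFun (f : nat -> R) : Cl12 :=
  mkCl (f 0%nat) (f 1%nat) (f 2%nat) (f 3%nat) (f 4%nat) (f 5%nat) (f 6%nat) (f 7%nat).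

Definition bit (n k : nat) : nat := if Nat.testbit n k then 1%nat else 0%nat.

(* Sign of the product of basis blades e_i e_j = sgn i j * e_(i xor j):
   (-1)^(number of transpositions needed + number of cancelled i2, i3),
   using i1^2 = 1, i2^2 = i3^2 = -1 and anticommutation. *)
Definition sgn (i j : nat) : R :=
  (-1) ^ (bit i 1 * bit j 0 + bit i 2 * bit j 0 + bit i 2 * bit j 1
          + bit i 1 * bit j 1 + bit i 2 * bit j 2).

Definition idx8 : list nat := seq 0 8.

Definition cl_add (a b : Cl12) : Cl12 := ofFun (fun k => coef a k + coef b k).

Definition cl_mul (a b : Cl12) : Cl12 :=
  ofFun (fun k => fold_right Rplus 0
           (map (fun i => sgn i (Nat.lxor i k) * coef a i * coef b (Nat.lxor i k)) idx8)).

Definition e (t : nat) : Cl12 := ofFun (fun k => if Nat.eqb k t then 1 else 0).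

Definition cl_one : Cl12 := e 0.

Definition invertible (c : Cl12) : Prop :=
  exists d : Cl12, cl_mul c d = cl_one /\ cl_mul d c = cl_one.

Definition Cim (a : Cl12) : Cl12 :=
  mkCl 0 (c1 a) (c2 a) (c3 a) (c4 a) (c5 a) (c6 a) 0.

Definition Nf (a : Cl12) : R :=
  c0 a ^ 2 - c1 a ^ 2 + c2 a ^ 2 - c3 a ^ 2 + c4 a ^ 2 - c5 a ^ 2 + c6 a ^ 2 - c7 a ^ 2.

Definition Tf (a : Cl12) : R :=
  c0 a * c7 a + c2 a * c5 a - c1 a * c6 a - c3 a * c4 a.

(* Main.v *)
Require Import Defs.
From Stdlib Require Import Reals.
Open Scope R_scope.
From Stdlib Require Import Lra Lia Classical.
Import Defs.

Definition conj (c : Cl12) : Cl12 :=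
  mkCl (c0 c) (- c1 c) (- c2 c) (- c3 c) (- c4 c) (- c5 c) (- c6 c) (c7 c).
Definition zero : Cl12 := mkCl 0 0 0 0 0 0 0 0.

Ltac crunch := unfold cl_mul, cl_add, ofFun, coef, idx8, sgn, bit, e, cl_one, Cim, conj, zero, Nf, Tf in *;
  cbv -[Rplus Rmult Ropp IZR Rminus Rdiv Rinv].

Lemma mul_conj c : cl_mul c (conj c) = mkCl (Nf c) 0 0 0 0 0 0 (2 * Tf c).
Proof. destruct c; unfold Nf, Tf; crunch; f_equal; ring. Qed.
Lemma conj_mul c : cl_mul (conj c) c = mkCl (Nf c) 0 0 0 0 0 0 (2 * Tf c).
Proof. destruct c; unfold Nf, Tf; crunch; f_equal; ring. Qed.
Lemma assoc a b c : cl_mul a (cl_mul b c) = cl_mul (cl_mul a b) c.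
Proof. destruct a, b, c; crunch; f_equal; ring. Qed.
Lemma one_mul c : cl_mul cl_one c = c.
Proof. destruct c; crunch; f_equal; ring. Qed.
Lemma mul_zero c : cl_mul c zero = zero.
Proof. destruct c; crunch; f_equal; ring. Qed.
Lemma central x y c : cl_mul (mkCl x 0 0 0 0 0 0 y) c = cl_mul c (mkCl x 0 0 0 0 0 0 y).
Proof. destruct c; crunch; f_equal; ring. Qed.

Lemma inv_nz c : invertible c -> Nf c <> 0 \/ Tf c <> 0.
Proof.
  intros [d [H1 H2]].
  destruct (classic (Nf c = 0 /\ Tf c = 0)) as [[HN HT]|H]; [|tauto].
  exfalso.
  assert (Hc : conj c = zero).
  { rewrite <- (one_mul (conj c)), <- H2, <- assoc, mul_conj, HN, HT.
    replace (mkCl 0 0 0 0 0 0 0 (2 * 0)) with zero by (unfold zero; f_equal; ring).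
    apply mul_zero. }
  destruct c as [x0 x1 x2 x3 x4 x5 x6 x7]. unfold conj, zero in Hc. simpl in Hc. injection Hc; intros.
  assert (x1 = 0) by lra. assert (x2 = 0) by lra. assert (x3 = 0) by lra.
  assert (x4 = 0) by lra. assert (x5 = 0) by lra. assert (x6 = 0) by lra.
  subst. apply (f_equal c0) in H1. destruct d. revert H1. crunch. intro H1. lra.
Qed.

Lemma zinv N T : N * N + 4 * (T * T) <> 0 ->
  cl_mul (mkCl N 0 0 0 0 0 0 (2 * T))
    (mkCl (N / (N * N + 4 * (T * T))) 0 0 0 0 0 0 (- 2 * T / (N * N + 4 * (T * T)))) = cl_one.
Proof. intro H. crunch. f_equal; field; auto. Qed.

Lemma nz_inv c : Nf c <> 0 \/ Tf c <> 0 -> invertible c.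
Proof.
  intros H.
  assert (HP : Nf c * Nf c + 4 * (Tf c * Tf c) <> 0).
  { intro E. destruct H as [H|H]; apply H; nra. }
  set (z := mkCl (Nf c / (Nf c * Nf c + 4 * (Tf c * Tf c))) 0 0 0 0 0 0
                 (- 2 * Tf c / (Nf c * Nf c + 4 * (Tf c * Tf c)))).
  exists (cl_mul (conj c) z). split.
  - rewrite assoc, mul_conj. apply zinv, HP.
  - rewrite <- assoc. unfold z. rewrite central, assoc, conj_mul. apply zinv, HP.
Qed.

Lemma keyN a b : let w t := cl_add (cl_mul (Cim a) (e t)) (cl_mul (e t) (Cim b)) in
  Nf (w 0%nat) - Nf (w 1%nat) + Nf (w 2%nat) - Nf (w 3%nat) = 4 * (Nf (Cim a) + Nf (Cim b)).
Proof. destruct a, b; crunch; ring. Qed.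
Lemma keyT a b : let w t := cl_add (cl_mul (Cim a) (e t)) (cl_mul (e t) (Cim b)) in
  Tf (w 0%nat) - Tf (w 1%nat) + Tf (w 2%nat) - Tf (w 3%nat) = 4 * (Tf (Cim a) + Tf (Cim b)).
Proof. destruct a, b; crunch; ring. Qed.

Theorem lemma5p1 (a b : Cl12) :
  invertible (Cim a) ->
  Nf (Cim a) = Nf (Cim b) ->
  Tf (Cim a) = Tf (Cim b) ->
  exists t : nat, (t <= 3)%nat /\
    invertible (cl_add (cl_mul (Cim a) (e t)) (cl_mul (e t) (Cim b))).
Proof.
  intros Hi HN HT.
  apply inv_nz in Hi.
  set (w t := cl_add (cl_mul (Cim a) (e t)) (cl_mul (e t) (Cim b))).
  assert (KN := keyN a b). assert (KT := keyT a b). simpl in KN, KT.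
  fold (w 0%nat) (w 1%nat) (w 2%nat) (w 3%nat) in KN, KT.
  destruct (classic (Nf (w 0%nat) <> 0 \/ Tf (w 0%nat) <> 0)) as [H0|H0].
  { exists 0%nat. split; [lia|]. apply nz_inv, H0. }
  destruct (classic (Nf (w 1%nat) <> 0 \/ Tf (w 1%nat) <> 0)) as [H1|H1].
  { exists 1%nat. split; [lia|]. apply nz_inv, H1. }
  destruct (classic (Nf (w 2%nat) <> 0 \/ Tf (w 2%nat) <> 0)) as [H2|H2].
  { exists 2%nat. split; [lia|]. apply nz_inv, H2. }
  destruct (classic (Nf (w 3%nat) <> 0 \/ Tf (w 3%nat) <> 0)) as [H3|H3].
  { exists 3%nat. split; [lia|]. apply nz_inv, H3. }
  exfalso.
  apply not_or_and in H0, H1, H2, H3.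
  destruct H0 as [A0 B0], H1 as [A1 B1], H2 as [A2 B2], H3 as [A3 B3].
  apply NNPP in A0, B0, A1, B1, A2, B2, A3, B3.
  destruct Hi as [Hi|Hi]; apply Hi; lra.
Qed.
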